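(* Let $(X_t)_{t\ge1}$ be a Markov chain on $[K^*]$ (with arbitrary initial distribution) whose transition matrix $Q^*$ has all entries $\ge\sigma_-$, where $\sigma_-\in(0,1)$. Let $\delta>0$. Then almost surely $$\liminf_{n\to\infty}\ \inf_{S}\ \inf_{x^*\in[K^*]}\ \frac1n\sum_{t\in S}\mathbf 1\{X_t=x^*\}\ \ge\ \frac{\delta\sigma_-}{4},$$ where the infimum over $S$ is over all segments $S\subset\{1,\dots,n\}$ with $|S|\ge\delta n$, a segment being a set of the form $[a,b]\cap\mathbb Z$ with $a,b\in\mathbb R$.
   Context: $[K^*]=\{1,\dots,K^*\}$, $K^*\ge1$ an integer; $|S|$ is the cardinality of $S$. *)

(* Defs.v *)
From HB Require Import structures.
From mathcomp Require Import all_boot all_order all_algebra.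
From mathcomp Require Import all_classical all_reals all_analysis.
Set Implicit Arguments. Unset Strict Implicit. Unset Printing Implicit Defensive.
Import Order.TTheory GRing.Theory Num.Theory.
Local Open Scope classical_set_scope.
Local Open Scope ring_scope.

Definition stochastic_matrix (R : realType) (K : nat) (Q : 'M[R]_K) : Prop :=
  (forall i j, 0 <= Q i j) /\ (forall i, \sum_(j < K) Q i j = 1).

(* (X_t)_{t >= 1} is a (time-homogeneous) Markov chain with transition matrix Q
   under P, with arbitrary initial distribution: every X_t is measurable
   (its level sets are events) and, for every n >= 1 and every path xs,
   P(X_1 = xs 1, ..., X_{n+1} = xs (n+1))
     = P(X_1 = xs 1, ..., X_n = xs n) * Q (xs n) (xs (n+1)).
   X 0 is unused. *)
Definition markov_chain (d : measure_display) (T : measurableType d)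
  (R : realType) (K : nat) (P : probability T R)
  (X : nat -> T -> 'I_K) (Q : 'M[R]_K) : Prop :=
  (forall t (x : 'I_K), measurable (X t @^-1` [set x])) /\
  (forall (n : nat) (xs : nat -> 'I_K), (1 <= n)%N ->
     P [set w | forall t, (1 <= t <= n.+1)%N -> X t w = xs t] =
     (P [set w | forall t, (1 <= t <= n)%N -> X t w = xs t] * (Q (xs n) (xs n.+1))%:E)%E).

Definition segment_in (R : realType) (n : nat) (a b : R) : Prop :=
  forall z : int, a <= z%:~R <= b -> (1 <= z)%R /\ (z <= n%:Z)%R.

Definition seg_card (R : realType) (n : nat) (a b : R) : nat :=
  \sum_(1 <= t < n.+1 | (a <= t%:R <= b)) 1%N.

Definition seg_freq (T : Type) (R : realType) (K : nat) (X : nat -> T -> 'I_K)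
  (w : T) (n : nat) (a b : R) (x : 'I_K) : R :=
  n%:R^-1 * \sum_(1 <= t < n.+1 | (a <= t%:R <= b)) (X t w == x)%:R.

(* inf over segments S ⊂ {1..n} with |S| >= delta n and over states x
   (extended-real infimum; +oo if there is no such segment). *)
Definition min_seg_freq (T : Type) (R : realType) (K : nat)
  (X : nat -> T -> 'I_K) (delta : R) (w : T) (n : nat) : \bar R :=
  ereal_inf [set y : \bar R | exists (a b : R) (x : 'I_K),
     [/\ segment_in n a b, delta * n%:R <= (seg_card n a b)%:R &
          y = (seg_freq X w n a b x)%:E]].

(* Main.v *)
Require Import Defs.
From HB Require Import structures.
From mathcomp Require Import all_boot all_order all_algebra.
From mathcomp Require Import all_classical all_reals all_analysis.
From mathcomp Require Import ring lra.
Import Order.TTheory GRing.Theory Num.Theory.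
Local Open Scope classical_set_scope.
Local Open Scope ring_scope.

Section Paths.
Context (d : measure_display) (T : measurableType d) (R : realType)
  (P : probability T R) (K : nat) (X : nat -> T -> 'I_K.+1).

Definition mu (A : set T) : R := fine (P A).

Lemma muE A : measurable A -> P A = (mu A)%:E.
Proof. by move=> mA; rewrite /mu fineK// fin_num_measure. Qed.

Lemma mu_ge0 A : 0 <= mu A.
Proof. by rewrite /mu fine_ge0// measure_ge0. Qed.

Lemma mu_le1 A : measurable A -> mu A <= 1.
Proof. by move=> mA; rewrite -lee_fin -muE// probability_le1. Qed.

Lemma le_mu A B : measurable A -> measurable B -> A `<=` B -> mu A <= mu B.
Proof. by move=> mA mB AB; rewrite -lee_fin -!muE// le_measure// inE. Qed.

Lemma mu_setU A B : measurable A -> measurable B -> mu (A `|` B) <= mu A + mu B.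
Proof.
by move=> mA mB; rewrite -lee_fin EFinD -!muE ?measureU2//; exact: measurableU.
Qed.

Lemma mu_bigU (I : Type) (r : seq I) (F : I -> set T) :
  (forall i, measurable (F i)) ->
  measurable (\big[setU/set0]_(i <- r) F i) /\
  mu (\big[setU/set0]_(i <- r) F i) <= \sum_(i <- r) mu (F i).
Proof.
move=> mF; elim: r => [|i r [IHm IHl]]; rewrite ?big_nil ?big_cons.
  by split => //; rewrite /mu measure0.
split; first exact: measurableU.
by rewrite (le_trans (@mu_setU _ _ (mF i) IHm))// lerD2l.
Qed.

Definition upd (xs : nat -> 'I_K.+1) (t : nat) (j : 'I_K.+1) : nat -> 'I_K.+1 :=
  fun u => if u == t then j else xs u.

Fixpoint sp (m : nat) (F : (nat -> 'I_K.+1) -> R) : R :=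
  match m with
  | 0 => F (fun _ => ord0)
  | m'.+1 => sp m' (fun xs => \sum_(j < K.+1) F (upd xs m'.+1 j))
  end.

Lemma sp_le m F G : (forall xs, F xs <= G xs) -> sp m F <= sp m G.
Proof.
elim: m F G => [|m IH] F G FG /=; first exact: FG.
by apply: IH => xs; apply: ler_sum => j _; apply: FG.
Qed.

Lemma sp_ext m F G : (forall xs, F xs = G xs) -> sp m F = sp m G.
Proof.
elim: m F G => [|m IH] F G FG /=; first exact: FG.
by apply: IH => xs; apply: eq_bigr => j _; apply: FG.
Qed.

Lemma sp_scale m c F : sp m (fun xs => c * F xs) = c * sp m F.
Proof.
elim: m F => [|m IH] F //=.
by rewrite -IH; apply: sp_ext => xs; rewrite mulr_sumr.
Qed.

Lemma sp_sum m (I : Type) (r : seq I) (G : I -> (nat -> 'I_K.+1) -> R) :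
  sp m (fun xs => \sum_(i <- r) G i xs) = \sum_(i <- r) sp m (G i).
Proof.
elim: m G => [|m IH] G //=.
rewrite -IH; apply: sp_ext => xs; exact: exchange_big.
Qed.

Definition cyl m (xs : nat -> 'I_K.+1) :=
  [set w | forall t, (1 <= t <= m)%N -> X t w = xs t].

Definition pathw m w : nat -> 'I_K.+1 :=
  fun t => if (1 <= t <= m)%N then X t w else ord0.

Context (mX : forall t (x : 'I_K.+1), measurable (X t @^-1` [set x])).

Lemma cyl_meas m xs : measurable (cyl m xs).
Proof.
elim: m => [|m IH].
  by rewrite (_ : cyl 0 xs = setT) //; apply/seteqP; split => // w _ t /andP[/leq_trans h /h].
rewrite (_ : cyl m.+1 xs = cyl m xs `&` X m.+1 @^-1` [set xs m.+1]); first exact: measurableI.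
apply/seteqP; split => w.
  move=> h; split; first by move=> t /andP[t1 tm]; apply: h; rewrite t1 (leq_trans tm).
  by apply: h; rewrite leqnn.
move=> [h1 h2] t /andP[t1]; rewrite leq_eqVlt => /orP[/eqP->//|]; rewrite ltnS => tm.
by apply: h1; rewrite t1.
Qed.

Lemma pathw0 w : pathw 0 w = fun _ => ord0.
Proof. by apply: funext => t; rewrite /pathw; case: t. Qed.

Lemma pathwS m w : pathw m.+1 w = upd (pathw m w) m.+1 (X m.+1 w).
Proof.
apply: funext => t; rewrite /pathw /upd; case: eqP => [->|/eqP tm].
  by rewrite leqnn.
by rewrite [(t <= m.+1)%N]leq_eqVlt (negbTE tm) /= ltnS.
Qed.

Lemma cover m (B : set T) (Pi : (nat -> 'I_K.+1) -> bool) :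
  measurable B ->
  measurable ([set w | Pi (pathw m w)] `&` B) /\
  mu ([set w | Pi (pathw m w)] `&` B) <=
    sp m (fun xs => mu (cyl m xs `&` B) * (Pi xs)%:R).
Proof.
elim: m B Pi => [|m IH] B Pi mB /=.
  under eq_set do rewrite pathw0.
  case: (Pi _) => /=; rewrite ?mulr1 ?mulr0 /cyl.
  have -> : [set _ | true] `&` B = B.
      by apply/seteqP; split => [w []|w Bw].
    split => //; apply: le_mu => //.
      by apply: measurableI => //; apply: (cyl_meas 0 (fun _ => ord0)).
    by move=> w Bw; split => // t /andP[/leq_trans h /h].
  have -> : [set _ | false] `&` B = set0.
    by apply/seteqP; split => [w []|w].
  by rewrite /mu measure0.
have E : [set w | Pi (pathw m.+1 w)] `&` B =
  \big[setU/set0]_(j <- enum 'I_K.+1)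
    ([set w | Pi (upd (pathw m w) m.+1 j)] `&` (B `&` X m.+1 @^-1` [set j])).
  apply/seteqP; split => w.
    move=> [Pw Bw]; rewrite -bigcup_seq; exists (X m.+1 w).
      by rewrite /= mem_enum.
    by split; [rewrite /= -pathwS|].
  rewrite -bigcup_seq => -[j _ [Pw [Bw /= Xj]]]; split => //.
  by rewrite pathwS Xj.
have mj j : measurable (B `&` X m.+1 @^-1` [set j]) by apply: measurableI.
rewrite E; have [mU lU] := @mu_bigU _ (enum 'I_K.+1) _
  (fun j => (IH _ (fun xs => Pi (upd xs m.+1 j)) (mj j)).1).
split => //; apply: (le_trans lU).
rewrite sp_sum big_enum /=; apply: ler_sum => j _.
apply: (le_trans (IH _ (fun xs => Pi (upd xs m.+1 j)) (mj j)).2); apply: sp_le => xs.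
rewrite ler_wpM2r//; apply: le_mu.
- by apply: measurableI => //; exact: cyl_meas.
- by apply: measurableI => //; exact: cyl_meas.
move=> w [cw [Bw Xw]]; split => // t /andP[t1 tm].
rewrite /upd; case: eqP => [->//|/eqP tn]; apply: cw.
by rewrite t1 -ltnS ltn_neqAle tn.
Qed.

Context (Q : 'M[R]_K.+1) (mc : markov_chain P X Q).

Lemma cyl_upd m xs j : cyl m (upd xs m.+1 j) = cyl m xs.
Proof.
have E t : (1 <= t <= m)%N -> upd xs m.+1 j t = xs t.
  by move=> /andP[_ tm]; rewrite /upd ifF//; apply: ltn_eqF; rewrite ltnS.
by apply/seteqP; split => w h t tm; rewrite -?E// h// E.
Qed.

Lemma mu_step m xs j : (1 <= m)%N ->
  mu (cyl m.+1 (upd xs m.+1 j)) = mu (cyl m xs) * Q (xs m) j.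
Proof.
move=> m1.
have h : P (cyl m.+1 (upd xs m.+1 j)) =
  (P (cyl m (upd xs m.+1 j)) * (Q (upd xs m.+1 j m) (upd xs m.+1 j m.+1))%:E)%E
  := mc.2 m (upd xs m.+1 j) m1.
apply: EFin_inj; rewrite EFinM -!muE; [|exact: cyl_meas..].
rewrite h cyl_upd /upd eqxx.
by rewrite ifF// ltn_eqF.
Qed.

Context (x : 'I_K.+1) (s : nat) (sigma : R) (hs : 0 < sigma)
  (stoch : stochastic_matrix Q) (hQ : forall i j, sigma <= Q i j).

Definition cnt m (xs : nat -> 'I_K.+1) : nat := (\sum_(s <= t < m.+1) (xs t == x))%N.

Lemma cnt_upd m xs j :
  cnt m.+1 (upd xs m.+1 j) = (cnt m xs + ((s <= m.+1) && (j == x)))%N.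
Proof.
rewrite /cnt; case: (leqP s m.+1) => sm /=.
  rewrite big_nat_recr //= /upd eqxx; congr (_ + _)%N.
  by apply: eq_big_nat => t /andP[_ tm]; rewrite (ltn_eqF tm).
by rewrite !big_geq ?(ltnW sm).
Qed.

Definition H m := sp m (fun xs => mu (cyl m xs) * expR (- (cnt m xs)%:R)).

Lemma expRm1 : expR (-1) <= 2^-1 :> R.
Proof.
rewrite expRN lef_pV2 ?posrE ?expR_gt0//.
by have := expR_ge1Dx (1 : R); rewrite (_ : 1 + 1 = 2 :> R)//.
Qed.

Lemma inner_le i (b : bool) :
  \sum_(j < K.+1) Q i j * expR (- (b && (j == x))%:R)
  <= (if b then expR (- (sigma / 2)) else 1).
Proof.
case: b => /=.
  rewrite (bigD1 x) //= eqxx /=.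
  under eq_bigr => j /negbTE-> do rewrite /= oppr0 expR0 mulr1.
  have E : \sum_(j < K.+1 | j != x) Q i j = 1 - Q i x.
    by rewrite -(stoch.2 i) [in RHS](bigD1 x) //= addrAC subrr add0r.
  rewrite E.
  apply: (le_trans _ (expR_ge1Dx _)).
  have := expRm1; have := hQ i x; have := expR_ge0 (-1 : R).
  move=> h1 h2 h3.
  have p1 : 0 <= (Q i x - sigma) * (1 - expR (-1)) by apply: mulr_ge0; lra.
  have p2 : 0 <= sigma * (2^-1 - expR (-1)) by apply: mulr_ge0; [exact: ltW|rewrite subr_ge0].
  have e2 : (2^-1 : R) = 1 / 2 by rewrite div1r.
  rewrite e2 in p2.
  nra.
under eq_bigr do rewrite oppr0 expR0 mulr1.
by rewrite stoch.2.
Qed.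

Lemma H_step m : (1 <= m)%N ->
  H m.+1 <= (if (s <= m.+1)%N then expR (- (sigma / 2)) else 1) * H m.
Proof.
move=> m1; rewrite /H /= -sp_scale; apply: sp_le => xs.
under eq_bigr do rewrite mu_step // cnt_upd natrD opprD expRD.
rewrite (eq_bigr (fun j => (mu (cyl m xs) * expR (- (cnt m xs)%:R)) *
   (Q (xs m) j * expR (- (((s <= m.+1)%N && (j == x)))%:R)))); last first.
  by move=> j _; ring.
rewrite -mulr_sumr mulrC; apply: ler_wpM2r.
  by rewrite mulr_ge0 ?mu_ge0 ?expR_ge0.
exact: inner_le.
Qed.

Lemma sum_cyl1_le1 (c : nat -> 'I_K.+1) :
  \sum_(j < K.+1) mu (cyl 1 (upd c 1 j)) <= 1.
Proof.
have mF (j : 'I_K.+1) : measurable (cyl 1 (upd c 1 j)) by exact: cyl_meas.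
have tF : trivIset setT (fun j : 'I_K.+1 => cyl 1 (upd c 1 j)).
  move=> i j _ _ [w [hi hj]].
  have := hi 1%N isT; have := hj 1%N isT; rewrite /upd eqxx /= => Hj Hi.
  by rewrite -Hi Hj.
have E : (\sum_(j < K.+1) mu (cyl 1 (upd c 1 j)))%:E =
    P (\big[setU/set0]_(j < K.+1 | predT j) cyl 1 (upd c 1 j)).
  rewrite measure_bigsetU_ord// -sumEFin; apply: eq_bigr => j _.
  by apply/esym/muE.
rewrite -lee_fin E; apply: probability_le1; exact: bigsetU_measurable.
Qed.

Lemma H_bound m : (1 <= s)%N -> (1 <= m)%N ->
  H m <= expR (- (sigma / 2) * (m - s)%:R).
Proof.
move=> s1; elim: m => [//|m IH] _; case: m IH => [|m] IH.
  have -> : (1 - s = 0)%N by apply/eqP; rewrite subn_eq0.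
  rewrite mulr0 expR0 /H /=.
  apply: le_trans (sum_cyl1_le1 (fun _ => ord0)); apply: ler_sum => j _.
  rewrite -[leRHS]mulr1 ler_wpM2l ?mu_ge0// expR_le1 oppr_le0//.
apply: le_trans (H_step m.+1 isT) _.
have c0 : 0 <= (if (s <= m.+2)%N then expR (- (sigma / 2)) else 1).
  by case: ifP => _; rewrite ?expR_ge0.
apply: le_trans (ler_wpM2l c0 (IH isT)) _.
case: (leqP s m.+1) => sm.
  rewrite (leq_trans sm (leqnSn _)) -expRD [(m.+2 - s)%N]subSn// -natr1 ler_expR; lra.
have -> : (m.+1 - s = 0)%N by apply/eqP; rewrite subn_eq0 ltnW.
have -> : (m.+2 - s = 0)%N by apply/eqP; rewrite subn_eq0.
rewrite mulr0 expR0 mulr1; case: ifP => // _; by rewrite expR_le1 oppr_le0 divr_ge0 ?ltW.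
Qed.

Lemma seg_bound e k : (1 <= s)%N -> (1 <= e)%N ->
  measurable ([set w | (cnt e (pathw e w))%:R < k] `&` setT) /\
  mu ([set w | (cnt e (pathw e w))%:R < k] `&` setT) <=
    expR k * expR (- (sigma / 2) * (e - s)%:R).
Proof.
move=> s1 e1.
have [m1 l1] := cover e setT (fun xs => (cnt e xs)%:R < k) measurableT.
split => //; apply: le_trans l1 _.
apply: le_trans _ (ler_wpM2l (expR_ge0 k) (H_bound e s1 e1)).
rewrite /H -sp_scale; apply: sp_le => xs; rewrite setIT.
have [h|h] := ltP ((cnt e xs)%:R) k; rewrite /=.
  rewrite mulr1 mulrCA -expRD -[leLHS]mulr1 ler_wpM2l ?mu_ge0//.
  apply: le_trans (expR_ge1Dx _); lra.
by rewrite mulr0 mulr_ge0 ?expR_ge0// mulr_ge0 ?mu_ge0 ?expR_ge0.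
Qed.

End Paths.

Lemma seg_interval (R : realType) n (a b : R) :
  (exists t, (1 <= t <= n)%N && (a <= t%:R <= b)) ->
  exists s e, [/\ (1 <= s)%N, (s <= e)%N, (e <= n)%N &
    forall t, (1 <= t <= n)%N -> (a <= t%:R <= b) = (s <= t <= e)%N].
Proof.
move=> ex.
have ub : forall t, (fun t => (1 <= t <= n)%N && (a <= t%:R <= b)) t -> (t <= n)%N.
  by move=> t /andP[/andP[_ ->]].
case: (ex_minnP ex) => s Ps smin; case: (ex_maxnP ex ub) => e Pe emax.
exists s, e; split.
- by case/andP: Ps => /andP[].
- exact: smin.
- exact: ub.
move=> t tr; apply/idP/idP.
  move=> abt; have Pt : (1 <= t <= n)%N && (a <= t%:R <= b) by rewrite tr abt.
  by rewrite smin // emax.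
move=> /andP[st te].
case/andP: Ps => _ /andP[ha _]; case/andP: Pe => _ /andP[_ be].
by rewrite (le_trans ha) ?ler_nat// (le_trans _ be) ?ler_nat.
Qed.

Lemma sum_interval (V : Type) (idx : V) (op : Monoid.com_law idx)
  n s e (C : pred nat) (F : nat -> V) :
  (1 <= s)%N -> (s <= e)%N -> (e <= n)%N ->
  (forall t, (1 <= t <= n)%N -> C t = (s <= t <= e)%N) ->
  \big[op/idx]_(1 <= t < n.+1 | C t) F t = \big[op/idx]_(s <= t < e.+1) F t.
Proof.
move=> s1 se en hC.
rewrite (@big_cat_nat _ _ _ s) //; last exact: (leq_trans se (leq_trans en (leqnSn n))).
rewrite (@big_cat_nat _ _ _ e.+1 s) //; last exact: (leq_trans se (leqnSn e)).
have E1 : \big[op/idx]_(1 <= i < s | C i) F i = idx.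
  rewrite big_nat_cond big1 // => t /andP[/andP[t1 ts]]; rewrite hC; last first.
    by apply/andP; split; [|exact: leq_trans (ltnW ts) (leq_trans se en)].
  by rewrite leqNgt ts.
have E3 : \big[op/idx]_(e.+1 <= i < n.+1 | C i) F i = idx.
  rewrite big_nat_cond big1 // => t /andP[/andP[t1 ts]]; rewrite hC; last first.
    by apply/andP; split; [exact: leq_trans s1 (leq_trans se (ltnW t1))|rewrite -ltnS].
  by rewrite [(t <= e)%N]leqNgt t1 andbF.
have E2 : \big[op/idx]_(s <= i < e.+1 | C i) F i = \big[op/idx]_(s <= i < e.+1) F i.
  rewrite big_nat_cond [RHS]big_nat_cond.
  apply: eq_bigl => t; case: (boolP (s <= t < e.+1)%N) => //= /andP[st te].
  have te' : (t <= e)%N by rewrite -ltnS.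
  rewrite hC ?st ?te' //.
  by apply/andP; split; [exact: leq_trans s1 st|exact: leq_trans te' en].
by rewrite E1 E2 E3 Monoid.mul1m Monoid.mulm1.
Qed.

Lemma series_fin (R : realType) (u : nat -> \bar R) (A r : R) :
  0 <= A -> 0 < r -> r < 1 -> (forall n, (0 <= u n)%E) ->
  (forall n, (u n <= (A * r ^+ n)%:E)%E) -> (\sum_(0 <= n <oo) u n < +oo)%E.
Proof.
move=> A0 r0 r1 u0 ub.
apply: (@le_lt_trans _ _ (A / (1 - r))%:E); last exact: ltry.
apply: lime_le; first exact: is_cvg_ereal_nneg_natsum (fun n _ => u0 n).
apply: nearW => N.
apply: (@le_trans _ _ (\sum_(0 <= i < N) (A * r ^+ i)%:E)%E).
  by apply: lee_sum => i _; exact: ub.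
rewrite sumEFin lee_fin.
have r1' : `|r| < 1 by rewrite ger0_norm // ltW.
have := @geometric_le_lim R N A r A0 r0 r1'.
by rewrite /series /=.
Qed.

Lemma ev_arith (R : realType) (sigma delta N Z : R) : sigma < 1 ->
  0 <= sigma * (Z + 1 - delta * N) ->
  delta * sigma / 4 * N + - (sigma / 2) * Z <= 1 - delta * sigma / 4 * N.
Proof. move=> h p; nra. Qed.

Section Main.
Context (d : measure_display) (T : measurableType d) (R : realType)
  (P : probability T R) (K : nat) (X : nat -> T -> 'I_K.+1)
  (mX : forall t (x : 'I_K.+1), measurable (X t @^-1` [set x]))
  (Q : 'M[R]_K.+1) (mc : markov_chain P X Q) (sigma : R) (hs : 0 < sigma)
  (hs1 : sigma < 1) (stoch : stochastic_matrix Q) (hQ : forall i j, sigma <= Q i j)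
  (delta : R) (hd : 0 < delta).

Definition cst := delta * sigma / 4.

Definition Ev n s e x := [set w | (cnt K x s e (pathw d T K X e w))%:R < cst * n%:R]
  `&` setT.

Definition condb n s e := (1 <= s <= e)%N && (delta * n%:R <= ((e - s).+1)%:R).

Definition Bad n := \big[setU/set0]_(0 <= s < n.+1) \big[setU/set0]_(0 <= e < n.+1)
  \big[setU/set0]_(x <- enum 'I_K.+1) (if condb n s e then Ev n s e x else set0).

Lemma Ev_bound n s e x : condb n s e ->
  measurable (Ev n s e x) /\ mu d T R P (Ev n s e x) <= expR (1 - cst * n%:R).
Proof.
move=> /andP[/andP[s1 se] hc].
have [m l] := @seg_bound d T R P K X mX Q mc x s sigma hs stoch hQ e (cst * n%:R) s1
  (leq_trans s1 se).
split => //; apply: le_trans l _; rewrite -expRD ler_expR.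
rewrite -natr1 in hc.
have p : 0 <= sigma * ((e - s)%N%:R + 1 - delta * n%:R).
  by apply: mulr_ge0; [exact: ltW|rewrite subr_ge0].
rewrite /cst; exact: ev_arith.
Qed.

Lemma Bad_meas_bound n : measurable (Bad n) /\
  mu d T R P (Bad n) <= ((n.+1)%:R * (n.+1)%:R * (K.+1)%:R) * expR (1 - cst * n%:R).
Proof.
set B := expR (1 - cst * n%:R).
have inner s e : measurable (\big[setU/set0]_(x <- enum 'I_K.+1)
    (if condb n s e then Ev n s e x else set0)) /\
  mu d T R P (\big[setU/set0]_(x <- enum 'I_K.+1)
    (if condb n s e then Ev n s e x else set0)) <= (K.+1)%:R * B.
  have mF x : measurable (if condb n s e then Ev n s e x else set0).
    by case: ifP => [/(@Ev_bound n s e x) [] //|_]; exact: measurable0.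
  have [mU lU] := @mu_bigU d T R P _ (enum 'I_K.+1) _ mF.
  split => //; apply: le_trans lU _.
  rewrite big_enum /= (_ : (K.+1)%:R * B = \sum_(i < K.+1) B); last by rewrite sumr_const card_ord mulr_natl.
  apply: ler_sum => x _.
  case: ifP => [/(@Ev_bound n s e x) [] //|_]; rewrite /mu measure0 /=; exact: expR_ge0.
have middle s : measurable (\big[setU/set0]_(0 <= e < n.+1) \big[setU/set0]_(x <- enum 'I_K.+1)
    (if condb n s e then Ev n s e x else set0)) /\
  mu d T R P (\big[setU/set0]_(0 <= e < n.+1) \big[setU/set0]_(x <- enum 'I_K.+1)
    (if condb n s e then Ev n s e x else set0)) <= (n.+1)%:R * ((K.+1)%:R * B).
  have [mU lU] := @mu_bigU d T R P _ (index_iota 0 n.+1) _ (fun e => (inner s e).1).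
  split => //; apply: le_trans lU _.
  apply: le_trans (ler_sum _ (fun e _ => (inner s e).2)) _.
  by rewrite sumr_const_nat subn0 [X in _ <= X]mulr_natl.
have [mU lU] := @mu_bigU d T R P _ (index_iota 0 n.+1) _ (fun s => (middle s).1).
split => //; apply: le_trans lU _.
apply: le_trans (ler_sum _ (fun s _ => (middle s).2)) _.
by rewrite sumr_const_nat subn0 -!mulrA [X in _ <= X]mulr_natl.
Qed.

Lemma cst_gt0 : 0 < cst.
Proof. by rewrite /cst divr_gt0// mulr_gt0. Qed.

Definition Acst := 16 * (K.+1)%:R * expR (1 + cst / 2) / cst ^+ 2.
Definition rr := expR (- (cst / 2)).

Lemma Bad_geo n : mu d T R P (Bad n) <= Acst * rr ^+ n.
Proof.
have [_ hb] := Bad_meas_bound n; apply: le_trans hb _.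
set N := n%:R : R.
have c0 := cst_gt0.
have N0 : 0 <= N by rewrite /N ler0n.
have h1 := expR_ge1Dx (cst * (N + 1) / 4).
have h2 : cst * (N + 1) <= 4 * expR (cst * (N + 1) / 4).
  have h0 : 0 <= cst * (N + 1) by apply: mulr_ge0; [exact: ltW|lra].
  move: h1 h0; set y := expR _; move=> h1 h0; lra.
have h0 : 0 <= cst * (N + 1) by apply: mulr_ge0; [exact: ltW|lra].
have h3 : (cst * (N + 1)) ^+ 2 <= 16 * expR (cst * (N + 1) / 2).
  have -> : 16 * expR (cst * (N + 1) / 2) = (4 * expR (cst * (N + 1) / 4)) ^+ 2.
    rewrite exprMn -expRM_natl; congr (_ * expR _); by field.
  by rewrite !expr2 ler_pM.
have eN : (n.+1)%:R = N + 1 :> R by rewrite -natr1.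
rewrite eN /rr -expRM_natl.
have c2 : 0 < cst ^+ 2 by rewrite exprn_gt0.
rewrite -(ler_pM2l c2).
have k0 : 0 <= (K.+1)%:R * expR (1 - cst * N) :> R by rewrite mulr_ge0 ?expR_ge0.
rewrite (_ : cst ^+ 2 * ((N + 1) * (N + 1) * (K.+1)%:R * expR (1 - cst * N)) =
   (cst * (N + 1)) ^+ 2 * ((K.+1)%:R * expR (1 - cst * N))); last by ring.
apply: le_trans (ler_wpM2r k0 h3) _.
have eab : expR (cst * (N + 1) / 2) * expR (1 - cst * N) =
    expR (1 + cst / 2) * expR (N * - (cst / 2)).
  by rewrite -!expRD; congr expR; field.
rewrite (_ : 16 * expR (cst * (N + 1) / 2) * ((K.+1)%:R * expR (1 - cst * N)) =
   16 * (K.+1)%:R * (expR (cst * (N + 1) / 2) * expR (1 - cst * N))); last by ring.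
rewrite eab /Acst.
rewrite (_ : cst ^+ 2 * (16 * (K.+1)%:R * expR (1 + cst / 2) / cst ^+ 2 *
   expR (N * - (cst / 2))) = 16 * (K.+1)%:R * (expR (1 + cst / 2) *
   expR (N * - (cst / 2)))) //.
by field; rewrite gt_eqF.
Qed.

Lemma Bad_meas n : measurable (Bad n).
Proof. exact: (Bad_meas_bound n).1. Qed.

Lemma Bad_series : (\sum_(0 <= n <oo) P (Bad n) < +oo)%E.
Proof.
apply: (@series_fin R _ Acst rr).
- apply: divr_ge0; [apply: mulr_ge0; [exact: mulr_ge0|exact: expR_ge0]|apply: exprn_ge0; apply: ltW; exact: cst_gt0].
- exact: expR_gt0.
- by rewrite /rr expR_lt1 oppr_lt0 divr_gt0 ?cst_gt0.
- by move=> n; exact: measure_ge0.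
move=> n; rewrite (@muE d T R P _ (Bad_meas n)) lee_fin; exact: Bad_geo.
Qed.

Lemma good_of n w : (1 <= n)%N -> ~ Bad n w ->
  (cst%:E <= min_seg_freq X delta w n)%E.
Proof.
move=> n1 nB; apply: le_ereal_inf_tmp => y [a [b [x [_ hcard ->]]]].
rewrite lee_fin.
have [ex|nex] := pselect (exists t, (1 <= t <= n)%N && (a <= t%:R <= b)).
  have [s [e [s1 se en hC]]] := @seg_interval R n a b ex.
  have card : seg_card n a b = (e - s).+1.
    rewrite /seg_card (@sum_interval _ _ _ n s e (fun t => a <= t%:R <= b)) //.
    by rewrite sum_nat_const_nat muln1 subSn.
  have fr : seg_freq X w n a b x =
      n%:R^-1 * (cnt K x s e (pathw d T K X e w))%:R.
    rewrite /seg_freq (@sum_interval _ _ _ n s e (fun t => a <= t%:R <= b)) //.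
    rewrite /cnt natr_sum; congr (_ * _); apply: eq_big_nat => t /andP[st te].
    by rewrite /pathw ifT // (leq_trans s1 st) -ltnS te.
  have hc : condb n s e by rewrite /condb s1 se -card.
  have h : cst * n%:R <= (cnt K x s e (pathw d T K X e w))%:R.
    rewrite leNgt; apply/negP => hlt; apply: nB.
    rewrite /Bad -bigcup_seq; exists s; first by rewrite /= mem_index_iota ltnS (leq_trans se en).
    rewrite -bigcup_seq; exists e; first by rewrite /= mem_index_iota ltnS en.
    rewrite -bigcup_seq; exists x; first by rewrite /= mem_enum.
    by rewrite hc; split.
  rewrite fr ler_pdivlMl ?ltr0n // mulrC; exact: h.
exfalso.
have c0 : seg_card n a b = 0%N.
  rewrite /seg_card big_nat_cond big1 // => t /andP[/andP[t1 tn] abt].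
  by exfalso; apply: nex; exists t; rewrite t1 -ltnS tn abt.
move: hcard; rewrite c0 => h.
have : 0 < delta * n%:R by rewrite mulr_gt0 // ltr0n.
by rewrite ltNge h.
Qed.

Lemma main_ae : {ae P, forall w, (cst%:E <= limn_einf (min_seg_freq X delta w))%E}.
Proof.
exists (lim_sup_set Bad); split.
- apply: bigcapT_measurable => k; apply: bigcup_measurable => j _; exact: Bad_meas.
- apply: lim_sup_set_cvg0; [exact: Bad_meas|exact: Bad_series].
move=> w /= ng n _; apply: contrapT => hn; apply: ng.
rewrite limn_einf_lim; apply: lime_ge; first exact: is_cvg_einfs.
exists (maxn n 1) => // k /= hk.
apply: le_ereal_inf_tmp => y [j /= hj <-].
apply: good_of.
  by rewrite (leq_trans _ (leq_trans hk hj)) // leq_maxr.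
move=> hB; apply: hn; exists j => //=.
by rewrite (leq_trans _ (leq_trans hk hj)) // leq_maxl.
Qed.

End Main.

Theorem lemma13 (d : measure_display) (T : measurableType d) (R : realType)
  (P : probability T R) (K : nat) (X : nat -> T -> 'I_K) (Q : 'M[R]_K)
  (sigma delta : R) :
  (0 < K)%N ->
  0 < sigma < 1 ->
  stochastic_matrix Q ->
  (forall i j, sigma <= Q i j) ->
  markov_chain P X Q ->
  0 < delta ->
  {ae P, forall w, ((delta * sigma / 4)%:E <= limn_einf (min_seg_freq X delta w))%E}.
Proof.
move=> K0 /andP[s0 s1] stoch hQ mc d0.
move: X Q K0 stoch hQ mc; case: K => [//|K] X Q _ stoch hQ mc.
exact: (@main_ae d T R P K X mc.1 Q mc sigma s0 s1 stoch hQ delta d0).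
Qed.
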